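(* Let $G_m$ be a parametric regulatory network, $R$ a well-formed set of influence constraints, $v\in V$ and $P\in\mathbb P(G_m)$. Then $P\in\mathcal P_{(u,v,s)}$ for every $(u,v,s)\in R$ with $s\in\{-1,+1\}$ if and only if for all $\omega,\omega'\in\Omega_v$, $\omega\preceq_v\omega'$ implies $P_{v,\omega}\le P_{v,\omega'}$.
   Context: An influence graph is $G=(V,I)$, $V=\{1,\dots,n\}$, $I\subseteq V\times V$; regulators $n^-(v)=\{u\mid(u,v)\in I\}$. $m\in\mathbb N^n$, $D_v=\{0,\dots,m_v\}$, PRN $G_m=(G,m)$. Regulator states $\Omega_v=\prod_{u\in n^-(v)}D_u$; $\omega[u\leftarrow k]$ replaces component $u$ of $\omega$ by $k$. Parametrisations: vectors $P\in\mathbb P(G_m)$ with coordinates $P_{v,\omega}\in D_v$ for each $v\in V$, $\omega\in\Omega_v$. $R\subseteq V\times V\times\{+1,-1,\mathrm o\}$ is well-formed if $u\in n^-(v)$ for all $(u,v,c)\in R$ and never both $(u,v,+1),(u,v,-1)\in R$. $\mathcal P_{(u,v,+1)}=\{P\mid\forall\omega\in\Omega_v\forall x_u\in\{1..m_u\}:P_{v,\omega[u\leftarrow x_u]}\ge P_{v,\omega[u\leftarrow x_u-1]}\}$ and $\mathcal P_{(u,v,-1)}$ likewise with $\le$. The monotonicity order $\preceq_v$ on $\Omega_v$: $\omega\preceq_v\omega'$ iff for all $u\in n^-(v)$, $\omega_u\le\omega'_u$ if $(u,v,+1)\in R$, $\omega_u\ge\omega'_u$ if $(u,v,-1)\in R$,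 and $\omega_u=\omega'_u$ otherwise. *)

(* Defs.v *)
From mathcomp Require Import all_boot.
Set Implicit Arguments. Unset Strict Implicit. Unset Printing Implicit Defensive.

(* Vertices V = {1..n} are represented by 'I_n (0-indexed).
   An influence graph is I : rel 'I_n, with I u v meaning (u,v) \in I.
   m : 'I_n -> nat gives the maxima, D_v = {0..m v}. *)

Inductive sign := Pos | Neg | Obs.

Definition regulators (n : nat) (I : rel 'I_n) (v : 'I_n) : pred 'I_n :=
  fun u => I u v.

(* Regulator states Omega_v = prod_{u in n^-(v)} D_u, encoded as functions
   w : 'I_n -> nat with w u \in D_u on regulators and w u = 0 elsewhere
   (a canonical representative, making the encoding bijective). *)
Definition is_state (n : nat) (I : rel 'I_n) (m : 'I_n -> nat) (v : 'I_n)
  (w : 'I_n -> nat) : Prop :=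
  forall u, (regulators I v u -> w u <= m u) /\ (~~ regulators I v u -> w u = 0).

Definition upd (n : nat) (w : 'I_n -> nat) (u : 'I_n) (k : nat) : 'I_n -> nat :=
  fun x => if x == u then k else w x.

(* Parametrisations: P v w is the coordinate P_{v,w}; only its values on
   regulator states matter.  Membership in P(G_m): values lie in D_v. *)
Definition is_param (n : nat) (I : rel 'I_n) (m : 'I_n -> nat)
  (P : 'I_n -> ('I_n -> nat) -> nat) : Prop :=
  forall v w, is_state I m v w -> P v w <= m v.

Definition well_formed (n : nat) (I : rel 'I_n) (R : 'I_n -> 'I_n -> sign -> bool) : Prop :=
  (forall u v c, R u v c -> I u v) /\ (forall u v, ~ (R u v Pos /\ R u v Neg)).

Definition in_constr (n : nat) (I : rel 'I_n) (m : 'I_n -> nat)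
  (P : 'I_n -> ('I_n -> nat) -> nat) (u v : 'I_n) (s : sign) : Prop :=
  forall w, is_state I m v w ->
  forall x, 1 <= x <= m u ->
    match s with
    | Pos => P v (upd w u (x.-1)) <= P v (upd w u x)
    | Neg => P v (upd w u x) <= P v (upd w u (x.-1))
    | Obs => true
    end.

Definition mono_le (n : nat) (I : rel 'I_n) (R : 'I_n -> 'I_n -> sign -> bool)
  (v : 'I_n) (w w' : 'I_n -> nat) : Prop :=
  forall u, regulators I v u ->
    (R u v Pos -> w u <= w' u) /\
    (R u v Neg -> w' u <= w u) /\
    (~~ R u v Pos -> ~~ R u v Neg -> w u = w' u).

(* Main.v *)
Require Import Defs.
From mathcomp Require Import all_boot.
From Stdlib Require Import FunctionalExtensionality.
From mathcomp Require Import zify.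

Lemma upd_same (n : nat) (w : 'I_n -> nat) u : upd w u (w u) = w.
Proof. apply: functional_extensionality => x; rewrite /upd; by case: eqP => // ->. Qed.

Lemma upd_state n (I : rel 'I_n) m v w u k :
  is_state I m v w -> I u v -> k <= m u -> is_state I m v (upd w u k).
Proof.
move=> Hw Iu Hk x; rewrite /upd; case: eqP => [->|_]; last exact: Hw.
by split=> // /negP; rewrite /regulators Iu.
Qed.

Definition wdist {n : nat} (w w' : 'I_n -> nat) :=
  \sum_(x < n) ((w x - w' x) + (w' x - w x)).

Lemma wdist_upd n (w w' : 'I_n -> nat) u k :
  (k - w' u) + (w' u - k) < (w u - w' u) + (w' u - w u) ->
  wdist (upd w u k) w' < wdist w w'.
Proof.
move=> H; rewrite /wdist (bigD1 u) //= [X in _ < X](bigD1 u) //= {1 2}/upd eqxx.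
rewrite -addSn leq_add //; apply: leq_sum => i /negbTE Hi.
by rewrite /upd Hi.
Qed.

Theorem lemma1 (n : nat) (I : rel 'I_n) (m : 'I_n -> nat)
  (R : 'I_n -> 'I_n -> sign -> bool) (v : 'I_n)
  (P : 'I_n -> ('I_n -> nat) -> nat) :
  well_formed I R -> is_param I m P ->
  ((forall u s, s <> Obs -> R u v s -> in_constr I m P u v s) <->
   (forall w w', is_state I m v w -> is_state I m v w' ->
      mono_le I R v w w' -> P v w <= P v w')).
Proof.
move=> [wfI wfPN] _; split.
- move=> H w w' Hw Hw' Hle.
  suff: forall k w, wdist w w' <= k -> is_state I m v w -> mono_le I R v w w' ->
          P v w <= P v w' by apply; [apply: leqnn | |].
  elim=> [|k IH] {}w Hd {}Hw {}Hle.
  + have -> : w = w'; last by [].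
    apply: functional_extensionality => x.
    move: Hd; rewrite /wdist leqn0 sum_nat_eq0 => /forallP /(_ x) /implyP.
    move=> /(_ isT); rewrite addn_eq0 !subn_eq0 => /andP [a b].
    by apply/eqP; rewrite eqn_leq a b.
  + case: (boolP [forall x, w x == w' x]) => [/forallP Heq|].
      have -> : w = w' by apply: functional_extensionality => x; apply/eqP.
      by [].
    rewrite negb_forall => /existsP [u Hu].
    have Ireg : I u v.
      apply/negPn/negP => Hn.
      move: (Hw u) (Hw' u) => [_ /(_ Hn) e1] [_ /(_ Hn) e2].
      by move: Hu; rewrite e1 e2.
    have [hP [hN hO]] := Hle u Ireg.
    case RP: (R u v Pos).
    * have lt : w u < w' u by rewrite ltn_neqAle Hu hP.
      have Hmu : w' u <= m u by case: (Hw' u) => /(_ Ireg).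
      have step : P v w <= P v (upd w u (w u).+1).
        have := H u Pos ltac:(discriminate) RP w Hw (w u).+1.
        rewrite /= upd_same; apply.
        exact: leq_trans lt Hmu.
      apply: leq_trans step _; apply: IH.
      - rewrite -ltnS; apply: leq_trans Hd; apply: wdist_upd.
        move: lt; clear; lia.
      - apply: upd_state => //; exact: leq_trans lt Hmu.
      - move=> x Ix; rewrite /upd; case: eqP => [->|_]; last exact: Hle.
        split; first by []. split; last by rewrite RP.
        by move=> RN; case: (wfPN u v).
    * have RN : R u v Neg.
        apply/negPn/negP => RN; move: Hu; rewrite hO ?RP // eqxx //.
      have lt : w' u < w u by rewrite ltn_neqAle eq_sym Hu hN.
      have Hmu : w u <= m u by case: (Hw u) => /(_ Ireg).
      have step : P v w <= P v (upd w u (w u).-1).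
        have := H u Neg ltac:(discriminate) RN w Hw (w u).
        rewrite /= upd_same; apply; rewrite Hmu andbT.
        exact: leq_ltn_trans (leq0n _) lt.
      apply: leq_trans step _; apply: IH.
      - rewrite -ltnS; apply: leq_trans Hd; apply: wdist_upd.
        move: lt; clear; lia.
      - apply: upd_state => //; exact: leq_trans (leq_pred _) Hmu.
      - move=> x Ix; rewrite /upd; case: eqP => [->|_]; last exact: Hle.
        rewrite RP RN; split=> [//|]; split=> [_|//]; move: lt; clear; lia.
- move=> H u s Hs Rs w Hw x /andP [x1 xm].
  have Iu := wfI _ _ _ Rs.
  case: s Hs Rs => // _ Rs; apply: H; try (apply: upd_state => //;
     exact: leq_trans (leq_pred _) xm);
  move=> y Iy; rewrite /upd; case: eqP => [->|_]; try (by split => //; split => // _ _);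
  rewrite Rs.
  + split; first by rewrite leq_pred. split; last by [].
    by move=> RN; case: (wfPN u v).
  + split; first by move=> RP; case: (wfPN u v).
    by split; first by rewrite leq_pred.
Qed.
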